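(* Let $\mathfrak{L}_3(\alpha_1,\beta_1,\gamma_1,\alpha_2,\beta_2,\gamma_2):=P(Z(\alpha_1,\beta_1,\gamma_1),Y(\alpha_2,\beta_2,\gamma_2))$ for $(\alpha_i,\beta_i,\gamma_i)\in(-\pi,\pi]\times(0,\pi)\times(-\pi,\pi]$, $i=1,2$. Then no point with $\alpha_2=\gamma_2=0$ is a critical point of $\mathfrak{L}_3$, i.e. the gradient of $\mathfrak{L}_3$ with respect to all variables is nonzero at every such point.
   Context: Basis of $\mathbb C^3$: $|1\rangle,|2\rangle,|3\rangle$ (standard basis). Spin-1 matrices in this basis: $J_y=\frac{1}{\sqrt2}\begin{pmatrix}0&-i&0\\ i&0&-i\\ 0&i&0\end{pmatrix}$, $J_z=\mathrm{diag}(1,0,-1)$. Define $Z(\alpha,\beta,\gamma)=e^{-i\alpha J_z}e^{-i\beta J_y}e^{-i\gamma J_z}$ and $Y(\alpha,\beta,\gamma)=e^{-i\alpha J_y}e^{-i\beta J_z}e^{-i\gamma J_y}$. Let $\mathcal R=\{Z(\alpha,\beta,\gamma):\alpha,\beta,\gamma\in\mathbb R\}\subset U(3)$. For $j\in\{1,2\}$ let $P_j=|j\rangle\langle j|$ and $\mathcal M_j(\rho)=P_j\rho P_j+(\mathbb I-P_j)\rho(\mathbb I-P_j)$. Define $P(U_1,U_2)=\langle 2|U_2\,\mathcal M_1(U_1|1\rangle\langle 1|U_1^\dagger)\,U_2^\dagger|2\rangle$ for $U_1,U_2\in\mathcal R$. *)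

(* Defs.v *)
From Stdlib Require Import Reals Factorial.
From Coquelicot Require Import Coquelicot.
Open Scope R_scope.

(* 3x3 complex matrices, indices 0,1,2 standing for |1>,|2>,|3>.
   Entries outside {0,1,2} are irrelevant (products only sum over 0..2). *)
Definition mat := nat -> nat -> C.

Definition mmul (A B : mat) : mat :=
  fun i j => Cplus (Cmult (A i 0%nat) (B 0%nat j))
               (Cplus (Cmult (A i 1%nat) (B 1%nat j)) (Cmult (A i 2%nat) (B 2%nat j))).
Definition madd (A B : mat) : mat := fun i j => Cplus (A i j) (B i j).
Definition msub (A B : mat) : mat := fun i j => Cminus (A i j) (B i j).
Definition mscale (c : C) (A : mat) : mat := fun i j => Cmult c (A i j).
Definition mid : mat := fun i j => if Nat.eqb i j then RtoC 1 else RtoC 0.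
Definition madj (A : mat) : mat := fun i j => Cconj (A j i).

Fixpoint mpow (A : mat) (n : nat) : mat :=
  match n with O => mid | S n => mmul A (mpow A n) end.

Definition mexp (A : mat) : mat :=
  fun i j => (Series (fun n => Re (mpow A n i j) / INR (Factorial.fact n)),
              Series (fun n => Im (mpow A n i j) / INR (Factorial.fact n))).

Definition Jy : mat := fun i j =>
  match i, j with
  | 0%nat, 1%nat => Cmult (RtoC (- / sqrt 2)) Ci
  | 1%nat, 0%nat => Cmult (RtoC (/ sqrt 2)) Ci
  | 1%nat, 2%nat => Cmult (RtoC (- / sqrt 2)) Ci
  | 2%nat, 1%nat => Cmult (RtoC (/ sqrt 2)) Ci
  | _, _ => RtoC 0
  end.
Definition Jz : mat := fun i j =>
  match i, j with
  | 0%nat, 0%nat => RtoC 1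
  | 2%nat, 2%nat => RtoC (-1)
  | _, _ => RtoC 0
  end.

Definition eJ (t : R) (J : mat) : mat := mexp (mscale (Cmult (RtoC (- t)) Ci) J).

Definition Zrot (a b c : R) : mat := mmul (mmul (eJ a Jz) (eJ b Jy)) (eJ c Jz).
Definition Yrot (a b c : R) : mat := mmul (mmul (eJ a Jy) (eJ b Jz)) (eJ c Jy).

Definition proj (k : nat) : mat :=
  fun i j => if andb (Nat.eqb i k) (Nat.eqb j k) then RtoC 1 else RtoC 0.

Definition M1 (rho : mat) : mat :=
  madd (mmul (mmul (proj 0) rho) (proj 0))
       (mmul (mmul (msub mid (proj 0)) rho) (msub mid (proj 0))).

Definition Pfun (U1 U2 : mat) : C :=
  mmul (mmul U2 (M1 (mmul (mmul U1 (proj 0)) (madj U1)))) (madj U2) 1%nat 1%nat.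

(* L_3 : the (real) value of P(Z(a1,b1,c1), Y(a2,b2,c2)).  P is a diagonal
   entry of a Hermitian matrix, hence real; we take its real part. *)
Definition L3 (a1 b1 c1 a2 b2 c2 : R) : R :=
  Re (Pfun (Zrot a1 b1 c1) (Yrot a2 b2 c2)).

(* Main.v *)
Require Import Defs.
From Stdlib Require Import Reals Lra Lia.
From Coquelicot Require Import Coquelicot.
Open Scope R_scope.

Lemma pser_cos t : is_pseries cos_n (t^2) (cos t).
Proof.
  unfold cos. destruct (exist_cos (Rsqr t)) as [a Ha].
  apply is_pseries_Reals. unfold Pser. replace (t^2) with (Rsqr t) by (unfold Rsqr; ring). exact Ha.
Qed.

Lemma pser_sin t : exists a, is_pseries sin_n (t^2) a /\ sin t = t * a.
Proof.
  unfold sin. destruct (exist_sin (Rsqr t)) as [a Ha]. exists a. split; [|reflexivity].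
  apply is_pseries_Reals. unfold Pser. replace (t^2) with (Rsqr t) by (unfold Rsqr; ring). exact Ha.
Qed.

Lemma is_series_lim (a : nat -> R) (l' l : R) : is_series a l -> l = l' -> is_series a l'.
Proof. intros H ->; exact H. Qed.

Lemma series_zero : is_series (fun _ : nat => 0) 0.
Proof.
  pose proof (is_series_scal 0 _ _ (pser_cos 0)) as H.
  eapply is_series_lim. eapply is_series_ext; [|exact H].
  intro n. simpl. unfold scal; simpl. unfold mult; simpl. ring.
  unfold scal; simpl. unfold mult; simpl. ring.
Qed.

Lemma pser_delta (p y : R) : is_pseries (fun k => if Nat.eqb k 0 then p else 0) y p.
Proof.
  unfold is_pseries. apply is_series_decr_1.
  eapply is_series_lim. eapply is_series_ext; [|exact series_zero].
  intro n. simpl. unfold scal; simpl; unfold mult; simpl. ring.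
  simpl. unfold scal, plus, opp; simpl; unfold mult, plus, opp; simpl. unfold one; simpl. ring.
Qed.

Lemma ser_main (r : nat -> R) (p q w t : R) :
 (forall k, r (2*k)%nat = (if Nat.eqb k 0 then p else 0) + q * (-1)^k) ->
 (forall k, r (2*k+1)%nat = w * (-1)^k) ->
 is_series (fun n => r n * t^n / INR (Factorial.fact n)) (p + q * cos t + w * sin t).
Proof.
  intros He Ho.
  destruct (pser_sin t) as [a [Ha Hs]].
  assert (H : is_pseries (fun n => r n / INR (Factorial.fact n)) t (p + q * cos t + w * sin t)).
  { rewrite Hs.
    replace (p + q * cos t + w * (t * a)) with ((p + q * cos t) + t * (w * a)) by ring.
    apply is_pseries_odd_even.
    - eapply is_pseries_ext.
      2: { apply (is_pseries_plus _ _ _ _ _ (pser_delta p (t^2)) (is_pseries_scal q _ _ _ (Rmult_comm _ _) (pser_cos t))). }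
      intro k. unfold PS_plus, PS_scal. rewrite He. unfold cos_n. unfold scal, plus; simpl; unfold mult, plus; simpl.
      destruct k as [|k]; simpl Nat.eqb; cbv iota; [simpl Factorial.fact; simpl INR; field|field; apply INR_fact_neq_0].
    - eapply is_pseries_ext.
      2: { apply (is_pseries_scal w _ _ _ (Rmult_comm _ _) Ha). }
      intro k. unfold PS_scal. rewrite Ho. unfold sin_n. unfold scal; simpl; unfold mult; simpl.
      field; apply INR_fact_neq_0. }
  unfold is_pseries in H. eapply is_series_ext; [|exact H].
  intro n. rewrite pow_n_pow. unfold scal; simpl; unfold mult; simpl. rewrite pow_n_pow. field. apply INR_fact_neq_0.
Qed.

Ltac Ceq := apply injective_projections; simpl; ring.

Definition Xm (J : mat) : mat := mscale (Cmult (RtoC (-1)) Ci) J.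
Definition dl (n : nat) : R := if Nat.eqb n 0 then 1 else 0.
Fixpoint ab (n : nat) : R * R :=
  match n with O => (0, 0) | S m => (dl m - snd (ab m), fst (ab m)) end.

Lemma ab_par k : fst (ab (2*k)) = 0 /\ snd (ab (2*k)) = dl k - (-1)^k /\
   fst (ab (2*k+1)) = (-1)^k /\ snd (ab (2*k+1)) = 0.
Proof.
  induction k as [|k IH].
  - simpl. unfold dl; simpl. repeat split; ring.
  - destruct IH as [H1 [H2 [H3 H4]]].
    assert (A1 : ab (2 * S k) = (dl (2*k+1) - snd (ab (2*k+1)), fst (ab (2*k+1)))).
    { replace (2 * S k)%nat with (S (2*k+1)) by lia. reflexivity. }
    assert (A2 : ab (2 * S k + 1) = (dl (2 * S k) - snd (ab (2 * S k)), fst (ab (2 * S k)))).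
    { replace (2 * S k + 1)%nat with (S (2 * S k)) by lia. reflexivity. }
    rewrite A2, A1. cbn [fst snd]. rewrite H3, H4.
    assert (D1 : dl (2*k+1) = 0) by (unfold dl; destruct (Nat.eqb_spec (2*k+1) 0); [lia|reflexivity]).
    assert (D2 : dl (2 * S k) = 0) by (unfold dl; destruct (Nat.eqb_spec (2*S k) 0); [lia|reflexivity]).
    assert (D3 : dl (S k) = 0) by reflexivity.
    rewrite D1, D2, D3. simpl. repeat split; ring.
Qed.

Lemma mid_r (A : mat) i j : (j <= 2)%nat ->
  Cplus (Cmult (A i 0%nat) (mid 0%nat j)) (Cplus (Cmult (A i 1%nat) (mid 1%nat j)) (Cmult (A i 2%nat) (mid 2%nat j))) = A i j.
Proof.
  intros Hj. destruct j as [|[|[|j]]]; try lia; unfold mid; simpl; Ceq.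
Qed.

Lemma mpow_form (J : mat)
  (H3 : forall i j, (i <= 2)%nat -> (j <= 2)%nat ->
     mmul (Xm J) (mmul (Xm J) (Xm J)) i j = Copp (Xm J i j)) (t : R) :
  forall n i j, (i <= 2)%nat -> (j <= 2)%nat ->
  mpow (mscale (Cmult (RtoC (- t)) Ci) J) n i j =
  Cmult (RtoC (t^n)) (Cplus (Cmult (RtoC (dl n)) (mid i j))
     (Cplus (Cmult (RtoC (fst (ab n))) (Xm J i j)) (Cmult (RtoC (snd (ab n))) (mmul (Xm J) (Xm J) i j)))).
Proof.
  induction n as [|n IH]; intros i j Hi Hj.
  - simpl. unfold dl; simpl. Ceq.
  - simpl mpow. unfold mmul at 1. rewrite !IH by lia.
    assert (HM : forall k, mscale (Cmult (RtoC (- t)) Ci) J i k = Cmult (RtoC t) (Xm J i k)).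
    { intro k. unfold mscale, Xm. Ceq. }
    rewrite !HM.
    pose proof (mid_r (Xm J) i j Hj) as E1.
    pose proof (H3 i j Hi Hj) as E3. unfold mmul at 1 in E3.
    set (x0 := Xm J i 0%nat) in *. set (x1 := Xm J i 1%nat) in *. set (x2 := Xm J i 2%nat) in *.
    transitivity (Cmult (RtoC t) (Cmult (RtoC (t ^ n)) (Cplus (Cmult (RtoC (dl n))
       (Cplus (Cmult x0 (mid 0%nat j)) (Cplus (Cmult x1 (mid 1%nat j)) (Cmult x2 (mid 2%nat j)))))
       (Cplus (Cmult (RtoC (fst (ab n))) (Cplus (Cmult x0 (Xm J 0%nat j)) (Cplus (Cmult x1 (Xm J 1%nat j)) (Cmult x2 (Xm J 2%nat j)))))
        (Cmult (RtoC (snd (ab n))) (Cplus (Cmult x0 (mmul (Xm J) (Xm J) 0%nat j)) (Cplus (Cmult x1 (mmul (Xm J) (Xm J) 1%nat j)) (Cmult x2 (mmul (Xm J) (Xm J) 2%nat j))))))))).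
    { ring. }
    rewrite E1, E3. cbn [ab fst snd].
    change (mmul (Xm J) (Xm J) i j) with (Cplus (Cmult x0 (Xm J 0%nat j)) (Cplus (Cmult x1 (Xm J 1%nat j)) (Cmult x2 (Xm J 2%nat j)))).
    replace (dl (S n)) with 0 by reflexivity. Ceq.
Qed.

Lemma dl2 k : dl (2*k) = dl k.
Proof. unfold dl. destruct k; reflexivity. Qed.
Lemma dl21 k : dl (2*k+1) = 0.
Proof. unfold dl. destruct (Nat.eqb_spec (2*k+1) 0); [lia|reflexivity]. Qed.

Lemma ser_comp (m x x2 t : R) :
  is_series (fun n => (dl n * m + fst (ab n) * x + snd (ab n) * x2) * t^n / INR (Factorial.fact n))
    (m + sin t * x + (1 - cos t) * x2).
Proof.
  eapply is_series_lim.
  apply (ser_main _ (m + x2) (- x2) x t).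
  - intro k. destruct (ab_par k) as [H1 [H2 _]]. rewrite H1, H2, dl2. unfold dl.
    destruct (Nat.eqb k 0); ring.
  - intro k. destruct (ab_par k) as [_ [_ [H3 H4]]]. rewrite H3, H4, dl21. ring.
  - ring.
Qed.

Lemma eJ_form (J : mat)
  (H3 : forall i j, (i <= 2)%nat -> (j <= 2)%nat ->
     mmul (Xm J) (mmul (Xm J) (Xm J)) i j = Copp (Xm J i j)) (t : R) i j :
  (i <= 2)%nat -> (j <= 2)%nat ->
  eJ t J i j = Cplus (mid i j) (Cplus (Cmult (RtoC (sin t)) (Xm J i j))
                 (Cmult (RtoC (1 - cos t)) (mmul (Xm J) (Xm J) i j))).
Proof.
  intros Hi Hj. unfold eJ, mexp. apply injective_projections; cbn [fst snd].
  - erewrite is_series_unique.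
    2: { eapply is_series_ext; [|apply (ser_comp (fst (mid i j)) (fst (Xm J i j)) (fst (mmul (Xm J) (Xm J) i j)) t)].
         intro n. rewrite (mpow_form J H3 t n i j Hi Hj). unfold Re. simpl. unfold Rdiv. ring. }
    simpl. ring.
  - erewrite is_series_unique.
    2: { eapply is_series_ext; [|apply (ser_comp (snd (mid i j)) (snd (Xm J i j)) (snd (mmul (Xm J) (Xm J) i j)) t)].
         intro n. rewrite (mpow_form J H3 t n i j Hi Hj). unfold Im. simpl. unfold Rdiv. ring. }
    simpl. ring.
Qed.
Lemma H3y : forall i j, (i <= 2)%nat -> (j <= 2)%nat ->
     mmul (Xm Jy) (mmul (Xm Jy) (Xm Jy)) i j = Copp (Xm Jy i j).
Proof.
  assert (Hs : / sqrt 2 * / sqrt 2 = / 2).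
  { rewrite <- Rinv_mult, sqrt_sqrt; lra. }

  intros i j Hi Hj.
  destruct i as [|[|[|i]]]; try lia; destruct j as [|[|[|j]]]; try lia;
  unfold mmul, Xm, mscale, Jy; apply injective_projections; simpl; ring_simplify.
  all: try nra.
  all: replace ((/ sqrt 2)^3) with (/sqrt 2 * (/sqrt 2 * /sqrt 2)) by ring; rewrite Hs; field.
  all: apply sqrt2_neq_0.
Qed.
Definition cn (z : C) : R := fst z * fst z + snd z * snd z.

Lemma L_rho U i j : mmul (mmul U (proj 0)) (madj U) i j = Cmult (U i 0%nat) (Cconj (U j 0%nat)).
Proof. unfold mmul, proj, madj. simpl. Ceq. Qed.

Lemma L_M1 r l k : (l <= 2)%nat -> (k <= 2)%nat ->
  M1 r l k = if Nat.eqb l 0 then (if Nat.eqb k 0 then r 0%nat 0%nat else RtoC 0)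
             else (if Nat.eqb k 0 then RtoC 0 else r l k).
Proof.
  intros Hl Hk. destruct l as [|[|[|l]]]; try lia; destruct k as [|[|[|k]]]; try lia;
  unfold M1, madd, mmul, msub, mid, proj; simpl; Ceq.
Qed.

Lemma Pfun_form U1 U2 : Re (Pfun U1 U2) =
  cn (Cmult (U2 1%nat 0%nat) (U1 0%nat 0%nat)) +
  cn (Cplus (Cmult (U2 1%nat 1%nat) (U1 1%nat 0%nat)) (Cmult (U2 1%nat 2%nat) (U1 2%nat 0%nat))).
Proof.
  unfold Pfun. set (r := mmul (mmul U1 (proj 0)) (madj U1)).
  unfold mmul at 1 2. unfold madj.
  rewrite !L_M1 by lia. cbn [Nat.eqb]. subst r. rewrite !L_rho.
  unfold Re, cn. simpl. ring.
Qed.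

Lemma H3z : forall i j, (i <= 2)%nat -> (j <= 2)%nat ->
     mmul (Xm Jz) (mmul (Xm Jz) (Xm Jz)) i j = Copp (Xm Jz i j).
Proof.
  intros i j Hi Hj.
  destruct i as [|[|[|i]]]; try lia; destruct j as [|[|[|j]]]; try lia;
  unfold mmul, Xm, mscale, Jz; Ceq.
Qed.

Definition s2 := / sqrt 2.
Lemma s2sq : s2 ^ 2 = / 2.
Proof. unfold s2. simpl. rewrite Rmult_1_r, <- Rinv_mult, sqrt_sqrt; lra. Qed.

Definition EZ (t : R) : mat := fun i j =>
  match i, j with
  | 0%nat, 0%nat => (cos t, - sin t)
  | 1%nat, 1%nat => (1, 0)
  | 2%nat, 2%nat => (cos t, sin t)
  | _, _ => (0, 0)
  end.
Definition EY (t : R) : mat := fun i j =>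
  match i, j with
  | 0%nat, 0%nat => ((1 + cos t)/2, 0)
  | 0%nat, 1%nat => (- s2 * sin t, 0)
  | 0%nat, 2%nat => ((1 - cos t)/2, 0)
  | 1%nat, 0%nat => (s2 * sin t, 0)
  | 1%nat, 1%nat => (cos t, 0)
  | 1%nat, 2%nat => (- s2 * sin t, 0)
  | 2%nat, 0%nat => ((1 - cos t)/2, 0)
  | 2%nat, 1%nat => (s2 * sin t, 0)
  | 2%nat, 2%nat => ((1 + cos t)/2, 0)
  | _, _ => (0, 0)
  end.

Lemma eJz_e t i j : (i <= 2)%nat -> (j <= 2)%nat -> eJ t Jz i j = EZ t i j.
Proof.
  intros Hi Hj. rewrite (eJ_form Jz H3z t i j Hi Hj).
  destruct i as [|[|[|i]]]; try lia; destruct j as [|[|[|j]]]; try lia;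
  unfold mmul, Xm, mscale, Jz, mid, EZ; Ceq.
Qed.

Lemma eJy_e t i j : (i <= 2)%nat -> (j <= 2)%nat -> eJ t Jy i j = EY t i j.
Proof.
  intros Hi Hj. rewrite (eJ_form Jy H3y t i j Hi Hj).
  pose proof s2sq as Hs. unfold s2 in Hs.
  destruct i as [|[|[|i]]]; try lia; destruct j as [|[|[|j]]]; try lia;
  unfold mmul, Xm, mscale, Jy, mid, EY, s2; apply injective_projections; simpl; ring_simplify;
  try rewrite Hs; field.
  all: apply sqrt2_neq_0.
Qed.

Lemma psi_e a b c i : (i <= 2)%nat ->
  Zrot a b c i 0%nat = Cmult (Cmult (EZ a i i) (EY b i 0%nat)) (EZ c 0%nat 0%nat).
Proof.
  intros Hi. unfold Zrot, mmul.
  destruct i as [|[|[|i]]]; try lia;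
  rewrite !eJz_e, !eJy_e by lia; unfold EZ, EY; Ceq.
Qed.

Lemma u_e a b c k : (k <= 2)%nat ->
  Yrot a b c 1%nat k =
  Cplus (Cmult (Cmult (EY a 1%nat 0%nat) (EZ b 0%nat 0%nat)) (EY c 0%nat k))
   (Cplus (Cmult (Cmult (EY a 1%nat 1%nat) (EZ b 1%nat 1%nat)) (EY c 1%nat k))
          (Cmult (Cmult (EY a 1%nat 2%nat) (EZ b 2%nat 2%nat)) (EY c 2%nat k))).
Proof.
  intros Hk. unfold Yrot, mmul.
  destruct k as [|[|[|k]]]; try lia;
  rewrite !eJz_e, !eJy_e by lia; unfold EZ; Ceq.
Qed.

Lemma sin2p x : sin x ^ 2 = 1 - cos x ^ 2.
Proof. pose proof (sin2 x) as H. rewrite !Rsqr_pow2 in H. exact H. Qed.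

Ltac trig := ring_simplify; rewrite ?s2sq, ?sin2p; field.

Lemma line1 a1 c1 b2 t : L3 a1 t c1 0 b2 0 = sin t ^ 2 / 2.
Proof.
  match goal with |- _ = ?r => set (rr := r) end.
  unfold L3. rewrite Pfun_form. rewrite !psi_e, !u_e by lia.
  unfold EZ, EY. rewrite sin_0, cos_0. unfold cn. simpl.
  subst rr. ring_simplify. rewrite ?s2sq, ?sin2p. field.
Qed.

Lemma line2 a1 b1 c1 b2 t : cos b1 = 0 -> sin b1 = 1 ->
  L3 a1 b1 c1 0 b2 t = (sin t^2/4 + cos t^2 - sin t * cos t * cos a1 + sin t^2/4)/2.
Proof.
  intros Hc Hs.
  match goal with |- _ = ?r => set (rr := r) end.
  unfold L3. rewrite Pfun_form. rewrite !psi_e, !u_e by lia.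
  unfold EZ, EY. rewrite sin_0, cos_0, Hc, Hs. unfold cn. simpl.
  subst rr. trig.
Qed.

Lemma line3 a1 b1 c1 b2 t : cos b1 = 0 -> sin b1 = 1 ->
  L3 a1 b1 c1 t b2 0 = (sin t^2/4 + cos t^2 - sin t * cos t * (cos a1 * cos b2 - sin a1 * sin b2) + sin t^2/4)/2.
Proof.
  intros Hc Hs.
  match goal with |- _ = ?r => set (rr := r) end.
  unfold L3. rewrite Pfun_form. rewrite !psi_e, !u_e by lia.
  unfold EZ, EY. rewrite sin_0, cos_0, Hc, Hs. unfold cn. simpl.
  subst rr. trig.
Qed.

Theorem lemma3 (a1 b1 c1 b2 : R)
  (ha1 : - PI < a1 <= PI) (hb1 : 0 < b1 < PI) (hc1 : - PI < c1 <= PI)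
  (hb2 : 0 < b2 < PI) :
  (exists d, d <> 0 /\ is_derive (fun t => L3 t b1 c1 0 b2 0) a1 d) \/
  (exists d, d <> 0 /\ is_derive (fun t => L3 a1 t c1 0 b2 0) b1 d) \/
  (exists d, d <> 0 /\ is_derive (fun t => L3 a1 b1 t 0 b2 0) c1 d) \/
  (exists d, d <> 0 /\ is_derive (fun t => L3 a1 b1 c1 t b2 0) 0 d) \/
  (exists d, d <> 0 /\ is_derive (fun t => L3 a1 b1 c1 0 t 0) b2 d) \/
  (exists d, d <> 0 /\ is_derive (fun t => L3 a1 b1 c1 0 b2 t) 0 d).
Proof.
  pose proof (sin_gt_0 b1 (proj1 hb1) (proj2 hb1)) as Sb1.
  pose proof (sin_gt_0 b2 (proj1 hb2) (proj2 hb2)) as Sb2.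
  destruct (Req_dec (cos b1) 0) as [Hc|Hc].
  - assert (Hs : sin b1 = 1).
    { pose proof (sin2p b1) as E. rewrite Hc in E. nra. }
    destruct (Req_dec (cos a1) 0) as [Ha|Ha].
    + right; right; right; left.
      exists (- (cos a1 * cos b2 - sin a1 * sin b2) / 2). split.
      * rewrite Ha. pose proof (sin2p a1) as E. rewrite Ha in E.
        intro H. assert (sin a1 = 0) by nra. nra.
      * eapply is_derive_ext.
        { intro t. symmetry. apply (line3 a1 b1 c1 b2 t Hc Hs). }
        auto_derive; auto. rewrite sin_0, cos_0. field.
    + right; right; right; right; right.
      exists (- cos a1 / 2). split.
      * intro H. apply Ha. lra.
      * eapply is_derive_ext.
        { intro t. symmetry. apply (line2 a1 b1 c1 b2 t Hc Hs). }
        auto_derive; auto. rewrite sin_0, cos_0. field.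
  - right; left.
    exists (sin b1 * cos b1). split.
    + intro H. apply Rmult_integral in H. destruct H; lra.
    + eapply is_derive_ext.
      { intro t. symmetry. apply (line1 a1 c1 b2 t). }
      auto_derive; auto. field.
Qed.
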